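(* Let $Z_0>0$, let $\mathbf Z_{AA}\in\mathbb C^{M\times M}$ be complex symmetric with $\mathbf R:=\operatorname{Re}\{\mathbf Z_{AA}\}$ positive definite, and let $\mathbf Z_A\in\mathbb C^{M\times M}$ be diagonal with $\mathbf Z_A$ and $\mathbf Z_A+Z_0\mathbf I_M$ invertible. Set $\boldsymbol\Gamma_A=(\mathbf Z_A+Z_0\mathbf I_M)^{-1}(\mathbf Z_A-Z_0\mathbf I_M)$, $\tilde{\boldsymbol\Gamma}_A=\boldsymbol\Gamma_A+\mathbf I_M$, and $\mathbf Z_A^D=-j\operatorname{Im}\{\mathbf Z_{AA}\}+Z_0\mathbf R^{1/2}\mathbf Z_A^{-1}\mathbf R^{1/2}$. Then $\mathbf Z_A^D+\mathbf Z_{AA}$ is invertible, and for arbitrary $\mathbf Z_{BU,k}\in\mathbb C^{1\times N}$, $\mathbf Z_{RU,k}\in\mathbb C^{1\times M}$, $\mathbf Z_{BR}\in\mathbb C^{M\times N}$, $\mathbf Z_{JU,qk}\in\mathbb C^{1\times N_J}$, $\mathbf Z_{JR,q}\in\mathbb C^{M\times N_J}$, writing $\mathbf W:=(\mathbf Z_A^D+\mathbf Z_{AA})^{-1}$: $$\tfrac{1}{2Z_0}\big(\mathbf Z_{BU,k}-\mathbf Z_{RU,k}\mathbf W\mathbf Z_{BR}\big)=\tfrac{1}{2Z_0}\big(\mathbf Z_{BU,k}-\tfrac12\tilde{\mathbf Z}_{RU,k}\tilde{\boldsymbol\Gamma}_A\tilde{\mathbf Z}_{BR}\big),$$ $$\tfrac{1}{2Z_0}\big(\mathbf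 Z_{JU,qk}-\mathbf Z_{RU,k}\mathbf W\mathbf Z_{JR,q}\big)=\tfrac{1}{2Z_0}\big(\mathbf Z_{JU,qk}-\tfrac12\tilde{\mathbf Z}_{RU,k}\tilde{\boldsymbol\Gamma}_A\tilde{\mathbf Z}_{JR,q}\big),$$ $$\tfrac{1}{2Z_0}\mathbf Z_{RU,k}\big(\mathbf I_M-\mathbf W\mathbf Z_{AA}^+\big)=\tfrac{1}{2Z_0}\big(\mathbf Z_{RU,k}-\tfrac12\tilde{\mathbf Z}_{RU,k}\tilde{\boldsymbol\Gamma}_A\bar{\mathbf Z}_{AA}\big),$$ $$\tfrac{1}{2Z_0}\big(\mathbf Z_{BR}-\mathbf Z_{AA}^+\mathbf W\mathbf Z_{BR}\big)=\tfrac{1}{2Z_0}\big(\mathbf Z_{BR}-\tfrac12\tilde{\mathbf Z}_{AA}\tilde{\boldsymbol\Gamma}_A\tilde{\mathbf Z}_{BR}\big),$$ $$\tfrac{1}{2Z_0}\big(\mathbf Z_{JR,q}-\mathbf Z_{AA}^+\mathbf W\mathbf Z_{JR,q}\big)=\tfrac{1}{2Z_0}\big(\mathbf Z_{JR,q}-\tfrac12\tilde{\mathbf Z}_{AA}\tilde{\boldsymbol\Gamma}_A\tilde{\mathbf Z}_{JR,q}\big),$$ $$\tfrac{1}{2Z_0}\big(\mathbf Z_{AA}^+-\mathbf Z_{AA}^+\mathbf W\mathbf Z_{AA}^+\big)=\tfrac{1}{2Z_0}\big(\mathbf Z_{AA}^+-\tfrac12\tilde{\mathbf Z}_{AA}\tilde{\boldsymbol\Gamma}_A\bar{\mathbf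 Z}_{AA}\big).$$ That is, replacing $\mathbf Z_A$ by $\mathbf Z_A^D$ in the $Z$-parameter channels $\mathbf H^E_{Z,k},\mathbf H^J_{Z,qk},\mathbf H^N_{Z,k},\breve{\mathbf H}^E_Z,\breve{\mathbf H}^J_{Z,q},\breve{\mathbf H}^N_Z$ yields the right-hand sides above.
   Context: $\mathbf Z_{AA}^+=\mathbf Z_{AA}+Z_0\mathbf I_M$; $\mathbf R^{1/2}$ is the symmetric positive definite square root of $\mathbf R=\operatorname{Re}\{\mathbf Z_{AA}\}$ and $\mathbf R^{-1/2}$ its inverse. Notation: $\tilde{\mathbf Z}_{RU,k}=\mathbf Z_{RU,k}\mathbf R^{-1/2}$, $\tilde{\mathbf Z}_{BR}=\mathbf R^{-1/2}\mathbf Z_{BR}$, $\tilde{\mathbf Z}_{JR,q}=\mathbf R^{-1/2}\mathbf Z_{JR,q}$, $\bar{\mathbf Z}_{AA}=\mathbf R^{-1/2}\mathbf Z_{AA}^+$, $\tilde{\mathbf Z}_{AA}=\mathbf Z_{AA}^+\mathbf R^{-1/2}$. The $Z$-parameter channels (for a load $\mathbf Z_A$) are $\mathbf H^E_{Z,k}=\frac{1}{2Z_0}(\mathbf Z_{BU,k}-\mathbf Z_{RU,k}(\mathbf Z_A+\mathbf Z_{AA})^{-1}\mathbf Z_{BR})$, $\mathbf H^J_{Z,qk}=\frac{1}{2Z_0}(\mathbf Z_{JU,qk}-\mathbf Z_{RU,k}(\mathbf Z_A+\mathbf Z_{AA})^{-1}\mathbf Z_{JR,q})$, $\mathbf H^N_{Z,k}=\frac{1}{2Z_0}\mathbf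 Z_{RU,k}(\mathbf I_M-(\mathbf Z_A+\mathbf Z_{AA})^{-1}\mathbf Z_{AA}^+)$, $\breve{\mathbf H}^E_Z=\frac{1}{2Z_0}(\mathbf Z_{BR}-\mathbf Z_{AA}^+(\mathbf Z_A+\mathbf Z_{AA})^{-1}\mathbf Z_{BR})$, $\breve{\mathbf H}^J_{Z,q}=\frac{1}{2Z_0}(\mathbf Z_{JR,q}-\mathbf Z_{AA}^+(\mathbf Z_A+\mathbf Z_{AA})^{-1}\mathbf Z_{JR,q})$, $\breve{\mathbf H}^N_Z=\frac{1}{2Z_0}(\mathbf Z_{AA}^+-\mathbf Z_{AA}^+(\mathbf Z_A+\mathbf Z_{AA})^{-1}\mathbf Z_{AA}^+)$. $\mathbf Z_A^D$ is the load impedance seen by the RIS elements when a power-matching decoupling network is inserted in front of the loads $\mathbf Z_A$. *)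

(* Defs.v *)
(* complex numbers as an arbitrary numClosedFieldType C
   (e.g. algC, or R[i] for a real-closed R). *)
From HB Require Import structures.
From mathcomp Require Import all_boot all_order all_algebra.
Set Implicit Arguments. Unset Strict Implicit. Unset Printing Implicit Defensive.
Import Order.TTheory GRing.Theory Num.Theory.
Local Open Scope ring_scope.

Section Defs.
Variable C : numClosedFieldType.

Definition Re_mx m n (A : 'M[C]_(m, n)) : 'M[C]_(m, n) := map_mx (fun z => 'Re z) A.
Definition Im_mx m n (A : 'M[C]_(m, n)) : 'M[C]_(m, n) := map_mx (fun z => 'Im z) A.

Definition real_mx m n (A : 'M[C]_(m, n)) : Prop := forall i j, A i j \is Num.real.

Definition real_posdef n (A : 'M[C]_n) : Prop :=
  real_mx A /\ A^T = A /\
  forall x : 'cV[C]_n, real_mx x -> x != 0 -> 0 < (x^T *m A *m x) 0 0.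

Definition is_spd_sqrt n (A S : 'M[C]_n) : Prop :=
  real_posdef S /\ S *m S = A.
End Defs.

(* Main.v *)
Require Import Defs.
From HB Require Import structures.
From mathcomp Require Import all_boot all_order all_algebra.
Import Order.TTheory GRing.Theory Num.Theory.
Local Open Scope ring_scope.

Lemma posdef_unit (C : numClosedFieldType) (M : nat) (R : 'M[C]_M) :
  real_posdef R -> R \in unitmx.
Proof.
move=> [Rreal [RT Rpos]].
apply/negPn/negP => hnu.
have hK : kermx R != 0 by rewrite kermx_eq0 row_free_unit.
have [u u0 uR] : exists2 u : 'rV[C]_M, u != 0 & u *m R = 0.
  have [i Hi] : exists i, row i (kermx R) != 0.
    apply/existsP; apply: contraNT hK => /existsPn H.
    apply/eqP/matrixP => i j; rewrite mxE.
    by move: (H i) => /negPn/eqP/matrixP/(_ 0 j); rewrite !mxE.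
  by exists (row i (kermx R)) => //; rewrite -row_mul mulmx_ker row0.
have Rc : map_mx Num.conj R = R.
  by apply/matrixP => i j; rewrite mxE conj_Creal.
have ucR : map_mx Num.conj u *m R = 0.
  by rewrite -{1}Rc -map_mxM uR map_mx0.
have key : forall x : 'rV[C]_M, real_mx x -> x *m R = 0 -> x = 0.
  move=> x xr xR; apply/eqP; apply: contraT => x0.
  have := Rpos x^T _ _.
  rewrite trmxK xR mul0mx mxE ltxx; apply => //.
    by move=> i j; rewrite mxE.
  by rewrite trmx_eq0.
pose a := map_mx (fun z => 'Re z) u.
pose b := map_mx (fun z => 'Im z) u.
have ha : a = (u + map_mx Num.conj u) *m (2^-1)%:M.
  by apply/matrixP => i j; rewrite mul_mx_scalar !mxE ReE mulrC.
have hb : b = ('i *: (map_mx Num.conj u - u)) *m (2^-1)%:M.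
  by apply/matrixP => i j; rewrite mul_mx_scalar !mxE ImE mulrC.
have a0 : a = 0.
  apply: key; first by move=> i j; rewrite mxE Creal_Re.
  by rewrite ha mul_mx_scalar -scalemxAl mulmxDl uR ucR addr0 scaler0.
have b0 : b = 0.
  apply: key; first by move=> i j; rewrite mxE Creal_Im.
  by rewrite hb mul_mx_scalar -scalemxAl -scalemxAl mulmxBl uR ucR subr0 !scaler0.
move/negP: u0; apply; apply/eqP/matrixP => i j.
rewrite [LHS]Crect mxE.
move/matrixP: a0 => /(_ i j); rewrite !mxE => ->.
move/matrixP: b0 => /(_ i j); rewrite !mxE => ->.
by rewrite mulr0 addr0.
Qed.

Theorem theorem2 (C : numClosedFieldType) (M N NJ : nat) (Z0 : C)
    (ZAA ZA Rh : 'M[C]_M) :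
  0 < Z0 ->
  ZAA^T = ZAA ->
  real_posdef (Re_mx ZAA) ->
  is_diag_mx ZA ->
  ZA \in unitmx ->
  ZA + Z0%:M \in unitmx ->
  (* Rh = R^{1/2}, the symmetric positive definite square root of R = Re{Z_AA} *)
  is_spd_sqrt (Re_mx ZAA) Rh ->
  let Rih := invmx Rh in
  let GammaA := invmx (ZA + Z0%:M) *m (ZA - Z0%:M) in
  let GammaAt := GammaA + 1%:M in
  let ZAD := - ('i *: Im_mx ZAA) + Z0 *: (Rh *m invmx ZA *m Rh) in
  let ZAAp := ZAA + Z0%:M in
  let ZAAbar := Rih *m ZAAp in
  let ZAAtil := ZAAp *m Rih in
  let W := invmx (ZAD + ZAA) in
  let c := (2 * Z0)^-1 in
  (ZAD + ZAA \in unitmx) /\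
  forall (ZBU : 'rV[C]_N) (ZRU : 'rV[C]_M) (ZBR : 'M[C]_(M, N))
         (ZJU : 'rV[C]_NJ) (ZJR : 'M[C]_(M, NJ)),
  let ZRUt := ZRU *m Rih in
  let ZBRt := Rih *m ZBR in
  let ZJRt := Rih *m ZJR in
  c *: (ZBU - ZRU *m W *m ZBR) = c *: (ZBU - 2^-1 *: (ZRUt *m GammaAt *m ZBRt)) /\
      c *: (ZJU - ZRU *m W *m ZJR) = c *: (ZJU - 2^-1 *: (ZRUt *m GammaAt *m ZJRt)) /\
      c *: (ZRU *m (1%:M - W *m ZAAp)) = c *: (ZRU - 2^-1 *: (ZRUt *m GammaAt *m ZAAbar)) /\
      c *: (ZBR - ZAAp *m W *m ZBR) = c *: (ZBR - 2^-1 *: (ZAAtil *m GammaAt *m ZBRt)) /\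
      c *: (ZJR - ZAAp *m W *m ZJR) = c *: (ZJR - 2^-1 *: (ZAAtil *m GammaAt *m ZJRt)) /\
      c *: (ZAAp - ZAAp *m W *m ZAAp) = c *: (ZAAp - 2^-1 *: (ZAAtil *m GammaAt *m ZAAbar)).
Proof.
move=> Z0pos ZAAT Rpd _ ZAu PU [_ hRh] Rih GammaA GammaAt ZAD ZAAp ZAAbar ZAAtil W c.
have Rhu : Rh \in unitmx.
  have Ru := @posdef_unit _ _ _ Rpd.
  by move: Ru; rewrite -hRh unitmx_mul => /andP[].
set P := ZA + Z0%:M.
have hX : ZAD + ZAA = Rh *m (invmx ZA *m P) *m Rh.
  rewrite /P mulmxDr mulVmx // mul_mx_scalar mulmxDr mulmxDl mulmx1 hRh.
  rewrite -scalemxAr -scalemxAl /ZAD.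
  have eZ : ZAA = Re_mx ZAA + 'i *: Im_mx ZAA.
    by apply/matrixP => i j; rewrite !mxE -Crect.
  set RR := Re_mx ZAA; set II := Im_mx ZAA.
  rewrite [X in _ + X = _]eZ.
  by rewrite [LHS]addrC -!addrA addNKr.
pose Y := Rih *m (invmx P *m ZA) *m Rih.
have YX : Y *m (ZAD + ZAA) = 1%:M.
  rewrite hX /Y /Rih !mulmxA.
  rewrite -[_ *m invmx Rh *m Rh]mulmxA mulVmx // mulmx1.
  rewrite -[_ *m ZA *m invmx ZA]mulmxA mulmxV // mulmx1.
  rewrite -[_ *m invmx P *m P]mulmxA mulVmx // mulmx1.
  by rewrite mulVmx.
have XY := mulmx1C YX.
have Xu : ZAD + ZAA \in unitmx by case: (mulmx1_unit XY).
split => //.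
have hW : W = 2^-1 *: (Rih *m GammaAt *m Rih).
  have -> : W = Y.
    by rewrite /W -[invmx _]mulmx1 -XY mulmxA mulVmx // mul1mx.
  rewrite /Y /GammaAt /GammaA.
  have -> : invmx P *m (ZA - Z0%:M) + 1%:M = invmx P *m (ZA *+ 2).
    rewrite -(mulVmx PU) -mulmxDr /P; congr (_ *m _).
    by rewrite addrACA addNr addr0 mulr2n.
  have h2 : (2 : C) != 0 by rewrite pnatr_eq0.
  by rewrite -scaler_nat -!scalemxAr -!scalemxAl scalerA mulVf // scale1r.
move=> ZBU ZRU ZBR ZJU ZJR ZRUt ZBRt ZJRt.
rewrite hW /ZRUt /ZBRt /ZJRt /ZAAbar /ZAAtil.
rewrite mulmxBr mulmx1.
rewrite -!(scalemxAl, scalemxAr) !mulmxA.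
by split; [|split; [|split; [|split; [|split]]]].
Qed.
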